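(* Let $r\ge1$ and let $\sigma=(1,1,\ldots,1)$ be the partition of $r$ into $r$ parts equal to $1$. Let $H=H(n,r,q\mid\sigma)$ with $n\ge(r+1)^2$ and $q\ge r$. Then $H$ has a maximum matching leaving exactly $p$ vertices unmatched, where $p$ is the remainder of $nq$ upon division by $r$; hence $\nu(H)=\left\lfloor\frac{nq}{r}\right\rfloor$.
   Context: A $\sigma$-hypergraph $H=H(n,r,q\mid\sigma)$, for a partition $\sigma$ of $r$, is the $r$-uniform hypergraph whose vertex set is the disjoint union of $n$ classes $V_1,\ldots,V_n$, each of size $q$; an $r$-subset $K$ of vertices is an edge iff the multiset of non-zero values $|K\cap V_i|$ equals $\sigma$ (so for $\sigma=(1,\ldots,1)$ the edges are the $r$-sets meeting $r$ distinct classes in one vertex each). A matching is a set of pairwise vertex-disjoint edges; $\nu(H)$ is the maximum size of a matching. *)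

(* Defs.v *)
From mathcomp Require Import all_boot.
Unset Printing Implicit Defensive.

(* Vertices of H(n,r,q|sigma): pairs (i, j), i the class index (< n), j the
   position inside class V_i (< q). *)
Definition vtx (n q : nat) : finType := ('I_n * 'I_q)%type.

Definition vclass (n q : nat) (i : 'I_n) : {set vtx n q} := [set x | x.1 == i].

Definition sigma_edge (n r q : nat) (sigma : seq nat) (K : {set vtx n q}) : bool :=
  (#|K| == r) &&
  perm_eq [seq c <- [seq #|K :&: vclass n q i| | i <- enum 'I_n] | c != 0] sigma.

Definition is_matching (n r q : nat) (sigma : seq nat) (M : {set {set vtx n q}}) : bool :=
  [forall K in M, sigma_edge n r q sigma K] &&
  [forall K1 in M, forall K2 in M, (K1 != K2) ==> [disjoint K1 & K2]].

Definition nu (n r q : nat) (sigma : seq nat) : nat :=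
  \max_(M : {set {set vtx n q}} | is_matching n r q sigma M) #|M|.

Definition unmatched (n q : nat) (M : {set {set vtx n q}}) : nat :=
  #|~: cover M|.

(* Main.v *)
Require Import Defs.
From mathcomp Require Import all_boot.
From mathcomp Require Import zify.

Lemma size_filter01 (s : seq nat) : all (fun c => c <= 1) s ->
  size [seq c <- s | c != 0] = sumn s.
Proof.
elim: s => [|c s IH] //= /andP [hc hs].
case: c hc => [|[|c]] //= _; by rewrite IH.
Qed.

Lemma edge_ok n q r (K : {set vtx n q}) : #|K| = r ->
  {in K &, forall x y, x.1 = y.1 -> x = y} -> sigma_edge n r q (nseq r 1) K.
Proof.
move=> hK hinj; rewrite /sigma_edge hK eqxx /=.
set c := fun i : 'I_n => #|K :&: vclass n q i|.
have c1 : forall i, c i <= 1.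
  move=> i; apply/card_le1_eqP => x y; rewrite !inE => /andP[xK /eqP xi] /andP[yK /eqP yi].
  by apply: hinj; rewrite // xi yi.
set s := [seq c <- _ | _].
have hs : s = nseq r 1.
  have hall : all (pred1 1) s.
    apply/allP => x; rewrite mem_filter => /andP[+ /mapP[i _ xE]].
    by rewrite xE /=; have := c1 i; case: (c i) => [|[|k]].
  rewrite (all_pred1P _ _ hall); congr nseq.
  rewrite /s size_filter01; last by apply/allP => x /mapP[i _ ->]; apply: c1.
  rewrite -hK (cardE K) -sum1_size.
  have -> : sumn [seq #|K :&: vclass n q i| | i <- enum 'I_n] = \sum_(i < n) c i.
    by rewrite sumnE big_map big_enum.
  rewrite big_enum /=.
  rewrite (partition_big (fun x : vtx n q => x.1) xpredT) //=.
  apply: eq_bigr => i _; rewrite /c cardE -sum1_size big_enum.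
  by apply: eq_bigl => x; rewrite !inE.
by rewrite hs perm_refl.
Qed.

Definition vert (n q k : nat) : vtx n.+1 q.+1 := (inord (k %% n.+1), inord (k %/ n.+1)).

Lemma vert_inj n q k l : k < n.+1 * q.+1 -> l < n.+1 * q.+1 ->
  vert n q k = vert n q l -> k = l.
Proof.
move=> hk hl [] /(congr1 (@nat_of_ord _)) e1 /(congr1 (@nat_of_ord _)) e2.
have md : forall m, m %% n.+1 <= n by move=> m; rewrite -ltnS ltn_pmod.
have dv : forall m, m < n.+1 * q.+1 -> m %/ n.+1 <= q.
  by move=> m hm; rewrite -ltnS ltn_divLR // mulnC.
rewrite !inordK ?ltnS ?md ?dv // in e1 e2.
by rewrite (divn_eq k n.+1) (divn_eq l n.+1) e1 e2.
Qed.

Lemma vert_class n q k : (vert n q k).1 = inord (k %% n.+1).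
Proof. by []. Qed.

Lemma mod_close N t a b : a < N -> b < N ->
  (t + a) %% N = (t + b) %% N -> a = b.
Proof.
wlog ab : a b / a <= b.
  move=> H ha hb e; case/orP: (leq_total a b) => h; first exact: H.
  by symmetry; apply: H.
move=> ha hb e.
have : (t + b == t + a %[mod N]) by rewrite e.
rewrite eqn_mod_dvd ?leq_add2l // subnDl.
case: (posnP (b - a)) => [h0 | hp]; first by move=> _; lia.
by rewrite gtnNdvd //; lia.
Qed.

Definition E n q r (t : nat) : {set vtx n.+1 q.+1} := [set vert n q (t * r + a) | a : 'I_r].
Definition Mm n q r : {set {set vtx n.+1 q.+1}} := [set E n q r t | t : 'I_(n.+1 * q.+1 %/ r)].

Lemma blk_bound n q r t a : t < n.+1 * q.+1 %/ r -> a < r -> t * r + a < n.+1 * q.+1.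
Proof.
move=> ht ha; apply: (@leq_trans (t.+1 * r)); first by rewrite mulSn addnC ltn_add2r.
apply: leq_trans (leq_divM _ r); by rewrite leq_mul2r ht orbT.
Qed.

Lemma vert_block n q r t s a b : t < n.+1 * q.+1 %/ r -> s < n.+1 * q.+1 %/ r ->
  a < r -> b < r -> vert n q (t * r + a) = vert n q (s * r + b) -> t = s /\ a = b.
Proof.
move=> ht hs ha hb /vert_inj e.
have {}e := e (blk_bound n q r t a ht ha) (blk_bound n q r s b hs hb).
have ts : t = s.
  case: (ltngtP t s) => // h.
  - have : t.+1 * r <= s * r by rewrite leq_mul2r h orbT.
    rewrite mulSn; move: e; move: (t * r) (s * r) => X Y; lia.
  - have : s.+1 * r <= t * r by rewrite leq_mul2r h orbT.
    rewrite mulSn; move: e; move: (t * r) (s * r) => X Y; lia.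
split=> //; subst; move: e; move: (s * r) => X; lia.
Qed.

Lemma card_E n q r (t : 'I_(n.+1 * q.+1 %/ r)) : #|E n q r t| = r.
Proof.
rewrite card_imset; first by rewrite card_ord.
move=> a b /vert_block [].
- exact: ltn_ord t.
- exact: ltn_ord t.
- exact: ltn_ord a.
- exact: ltn_ord b.
by move=> _ /val_inj.
Qed.

Lemma E_class n q r (t : 'I_(n.+1 * q.+1 %/ r)) : r <= n.+1 ->
  {in E n q r t &, forall x y, x.1 = y.1 -> x = y}.
Proof.
move=> rn x y /imsetP[a _ ->] /imsetP[b _ ->]; rewrite !vert_class => e.
have md : forall m, m %% n.+1 <= n by move=> m; rewrite -ltnS ltn_pmod.
have := congr1 (@nat_of_ord _) e.
rewrite (inordK (md _)) (inordK (md _)).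
move/(mod_close _ _ _ _ (leq_trans (ltn_ord a) rn) (leq_trans (ltn_ord b) rn)) => ab.
by have -> : a = b by apply: val_inj.
Qed.

Lemma matching_cover n r q sg (M : {set {set vtx n q}}) :
  is_matching n r q sg M -> #|cover M| = #|M| * r.
Proof.
case/andP=> /forallP hE /forallP hD.
have tr : trivIset M.
  apply/trivIsetP => A B hA hB hAB.
  by have := hD A; rewrite hA /= => /forallP /(_ B); rewrite hB hAB.
rewrite -(eqP tr) -sum_nat_const; apply: eq_bigr => K hK.
by have := hE K; rewrite hK /= => /andP[/eqP -> _].
Qed.

Lemma card_vtx n q : #|vtx n q| = n * q.
Proof. by rewrite /vtx card_prod !card_ord. Qed.

Lemma matching_bound n r q sg (M : {set {set vtx n q}}) : 0 < r ->
  is_matching n r q sg M -> #|M| <= n * q %/ r.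
Proof.
move=> r0 hM; rewrite leq_divRL // -(matching_cover _ _ _ _ _ hM) -card_vtx.
exact: max_card.
Qed.

Lemma Mm_ok n q r : 0 < r -> r <= n.+1 ->
  is_matching n.+1 r q.+1 (nseq r 1) (Mm n q r) /\ #|Mm n q r| = n.+1 * q.+1 %/ r.
Proof.
move=> r0 rn.
have a0 : 0 < r := r0.
split.
  apply/andP; split.
    apply/forallP => K; apply/implyP => /imsetP[t _ ->].
    apply: edge_ok; [exact: card_E | exact: E_class].
  apply/forallP => K1; apply/implyP => /imsetP[t _ ->].
  apply/forallP => K2; apply/implyP => /imsetP[s _ ->].
  apply/implyP => hne; rewrite -setI_eq0; apply/eqP/setP => x; rewrite !inE; apply/negbTE/negP => /andP[/imsetP[a _ ->] /imsetP[b _ e]].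
  case: (vert_block _ _ _ _ _ _ _ (ltn_ord t) (ltn_ord s) (ltn_ord a) (ltn_ord b) e) => ts _.
  have ts' : t = s by apply: val_inj.
  by move: hne; rewrite ts' eqxx.
rewrite card_imset ?card_ord // => t s e.
have : vert n q (t * r + 0) \in E n q r s.
  by rewrite -e; apply/imsetP; exists (Ordinal a0).
case/imsetP=> b _ e2.
case: (vert_block _ _ _ _ _ _ _ (ltn_ord t) (ltn_ord s) a0 (ltn_ord b) e2) => ts _.
exact: val_inj.
Qed.

Theorem lemma3p6 (n r q : nat) :
  1 <= r -> (r + 1) ^ 2 <= n -> r <= q ->
  (exists M : {set {set vtx n q}},
      [/\ is_matching n r q (nseq r 1) M,
          (forall M' : {set {set vtx n q}}, is_matching n r q (nseq r 1) M' -> #|M'| <= #|M|)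
        & unmatched n q M = (n * q) %% r])
  /\ nu n r q (nseq r 1) = (n * q) %/ r.
Proof.
case: n => [|n]; first by rewrite leqn0 expn_eq0 addn1.
case: q => [|q]; first by move=> r1 _ r0; move: (leq_trans r1 r0).
move=> r1 rn2 rq.
have rn : r <= n.+1.
  apply: leq_trans rn2; apply: (@leq_trans (r + 1)); first by rewrite addn1.
  by rewrite expnS expn1 leq_pmulr // addn1.
have [hM cM] := Mm_ok n q r r1 rn.
have ub : forall M', is_matching n.+1 r q.+1 (nseq r 1) M' -> #|M'| <= n.+1 * q.+1 %/ r.
  by move=> M'; apply: matching_bound.
split.
  exists (Mm n q r); split=> //.
    by move=> M' /ub; rewrite cM.
  rewrite /unmatched.
  have := cardsC (cover (Mm n q r)); rewrite card_vtx (matching_cover _ _ _ _ _ hM) cM.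
  rewrite {2}(divn_eq (n.+1 * q.+1) r).
  move: (n.+1 * q.+1 %/ r * r) => X; lia.
apply/eqP; rewrite eqn_leq; apply/andP; split.
  by apply/bigmax_leqP => M' /ub.
by rewrite -cM; apply: leq_bigmax_cond.
Qed.
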